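(* Let $x=(x_1,\dots,x_m)$ and let $y=(y_1,y_2,\dots)$ be a countably infinite alphabet. With $\epsilon_{a,t}$ acting on the $y$-variables, \[\epsilon_{ut^{m-1},t}\bigl(F(u;x,y;t)\bigr)=\prod_{i=1}^m\frac{1-ut^{m-i}}{1-ut^{m-1}x_i}\] and \[\epsilon_{a,t}\bigl(F(1;x,y;t)\bigr)=t^{\binom m2}x_1\cdots x_m\prod_{i=1}^m\frac{1-at^{1-i}}{1-ax_i}.\]
   Context: For $x=(x_1,\dots,x_m)$ and infinite $y$, \[F(u;x,y;t)=\sum_{I\subseteq\{1,\dots,m\}}(-u)^{|I|}t^{\binom{|I|}{2}}\prod_{i\in I,\ j\in\{1,\dots,m\}\setminus I}\frac{tx_i-x_j}{x_i-x_j}\prod_{i\in I}\prod_{j\ge1}\frac{1-x_iy_j}{1-tx_iy_j},\] where $\prod_{j\ge1}\frac{1-zy_j}{1-tzy_j}=\exp\bigl(-\sum_{r\ge1}(1-t^r)z^rp_r(y)/r\bigr)$ is a formal power series in $z$ whose coefficients are symmetric functions of $y$, $p_r(y)=\sum_j y_j^r$ being the power sums. The specialization $\epsilon_{a,t}$ is the ring homomorphism from symmetric functions in $y$ (over the field of rational functions in the parameters) defined by $\epsilon_{a,t}(p_r)=(1-a^r)/(1-t^r)$, applied coefficientwise; the identities are understood as identities of rational functions / their power series expansions. *)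

(* Defs.v *)
From mathcomp Require Import all_boot all_order all_algebra.
From mathcomp Require Import mpoly.

Set Implicit Arguments.
Unset Strict Implicit.
Unset Printing Implicit Defensive.

Import Order.TTheory GRing.Theory.
Local Open Scope ring_scope.

Definition ps1 (R : ringType) : nat -> R := fun n => (n == 0%N)%:R.

Definition psmul (R : ringType) (f g : nat -> R) : nat -> R :=
  fun n => \sum_(i < n.+1) f i * g (n - i)%N.

Definition pspow (R : ringType) (f : nat -> R) (k : nat) : nat -> R :=
  iter k (psmul f) (@ps1 R).

(* exp of a power series with zero constant term, over a K-algebra R *)
Definition psexp (K : fieldType) (R : lalgType K) (f : nat -> R) : nat -> R :=
  fun n => \sum_(k < n.+1) ((k`!)%:R : K)^-1 *: pspow f k n.

Definition psshift (R : ringType) (m : nat) (f : nat -> R) : nat -> R :=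
  fun n => if (m <= n)%N then f (n - m)%N else 0.

Definition geo (R : ringType) (c : R) : nat -> R := fun n => c ^+ n.

(* ---------- symmetric functions via power sums ----------
   Over a field of characteristic 0, Lambda = K[p_1, p_2, ...].  The coefficient
   of z^n in prod_j (1 - z y_j)/(1 - t z y_j) = exp(-sum_r (1-t^r) z^r p_r / r)
   only involves p_1..p_n, so we compute it in K[p_1,...,p_{n+1}] =
   {mpoly K[n.+1]}, where the variable 'X_i stands for p_{i+1}. *)
Definition psum (K : fieldType) (n r : nat) : {mpoly K[n.+1]} :=
  'X_(inord r.-1).

Definition hcoef (K : fieldType) (t : K) (n : nat) : {mpoly K[n.+1]} :=
  psexp (fun r => if r == 0%N then 0
                  else - ((1 - t ^+ r) / r%:R) *: psum K n r) n.

Definition eps (K : fieldType) (a t : K) (n : nat) (f : {mpoly K[n.+1]}) : K :=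
  f.@[fun i : 'I_n.+1 => (1 - a ^+ i.+1) / (1 - t ^+ i.+1)].

(* eps_{a,t} applied coefficientwise to prod_j (1 - w y_j)/(1 - t w y_j),
   evaluated at w = z * x_i (homogenized in an auxiliary variable z) *)
Definition eprod (K : fieldType) (a t w : K) : nat -> K :=
  fun n => eps a t (hcoef t n) * w ^+ n.

(* eps_{a,t}(F(u; z*x, y; t)) as a power series in z *)
Definition epsF (K : fieldType) (m : nat) (u a t : K) (x : 'I_m -> K) : nat -> K :=
  fun n => \sum_(I : {set 'I_m})
     (- u) ^+ #|I| * t ^+ 'C(#|I|, 2)
     * (\prod_(i in I) \prod_(j in ~: I) ((t * x i - x j) / (x i - x j)))
     * (\big[@psmul K/@ps1 K]_(i in I) eprod a t (x i)) n.

(* Main.v *)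
Require Import Defs.
From mathcomp Require Import all_boot all_order all_algebra.
From mathcomp Require Import mpoly.
From mathcomp Require Import ring zify.
From Stdlib Require Import FunctionalExtensionality.
Import GRing.Theory.
Local Open Scope ring_scope.

Set Implicit Arguments. Unset Strict Implicit. Unset Printing Implicit Defensive.

Section Top.
Variable K : fieldType.
Implicit Types p q : {poly K}.

Definition topeq p (k : nat) (v : K) :=
  forall j, (k <= j)%N -> p`_j = if j == k then v else 0.

Lemma topeqD p q k v w : topeq p k v -> topeq q k w -> topeq (p + q) k (v + w).
Proof. by move=> hp hq j hj; rewrite coefD hp // hq //; case: eqP; rewrite ?addr0. Qed.

Lemma topeqN p k v : topeq p k v -> topeq (- p) k (- v).
Proof. by move=> hp j hj; rewrite coefN hp //; case: eqP; rewrite ?oppr0. Qed.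

Lemma topeqB p q k v w : topeq p k v -> topeq q k w -> topeq (p - q) k (v - w).
Proof. by move=> hp hq; apply: topeqD => //; apply: topeqN. Qed.

Lemma topeqZ c p k v : topeq p k v -> topeq (c *: p) k (c * v).
Proof. by move=> hp j hj; rewrite coefZ hp //; case: eqP; rewrite ?mulr0. Qed.

Lemma topeq0 k : topeq 0 k 0.
Proof. by move=> j _; rewrite coef0; case: eqP. Qed.

Lemma topeqC c : topeq c%:P 0 c.
Proof. by move=> j _; rewrite coefC. Qed.

Lemma topeq_eq p k v w : v = w -> topeq p k v -> topeq p k w.
Proof. by move=> ->. Qed.

Lemma topeq_k p k k' v : k = k' -> topeq p k v -> topeq p k' v.
Proof. by move=> ->. Qed.

Lemma topeqS p k v : topeq p k v -> topeq p k.+1 0.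
Proof.
move=> hp j hj; rewrite hp ?(ltnW hj) //.
have -> : (j == k) = false by apply/eqP => e; rewrite e ltnn in hj.
by case: eqP.
Qed.

Lemma topeq_size p k v : topeq p k v -> (size p <= k.+1)%N.
Proof.
move=> hp; apply/leq_sizeP => j hj; rewrite hp ?(ltnW hj) //.
by have -> : (j == k) = false by apply/eqP => e; rewrite e ltnn in hj.
Qed.

Lemma topeq_size0 p k : topeq p k 0 -> (size p <= k)%N.
Proof. by move=> hp; apply/leq_sizeP => j hj; rewrite hp //; case: eqP. Qed.

Lemma topeqM p q k l v w : topeq p k v -> topeq q l w -> topeq (p * q) (k + l) (v * w).
Proof.
move=> hp hq j hj; rewrite coefM.
have hk : (k < j.+1)%N by lia.
rewrite (bigD1 (Ordinal hk)) //= big1 ?addr0.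
  rewrite hp // eqxx hq; last by lia.
  have -> : (j - k == l)%N = (j == k + l)%N.
    by apply/eqP/eqP => h; lia.
  by case: eqP; rewrite ?mulr0.
move=> [i hi] /= /eqP ne.
have ne' : i <> k by move=> e; apply: ne; apply: val_inj.
case: (ltngtP i k) => h.
- rewrite (hq (j - i)%N); last by lia.
  have -> : (j - i == l)%N = false by apply/eqP; lia.
  by rewrite mulr0.
- rewrite hp; last by lia.
  have -> : (i == k) = false by apply/eqP; lia.
  by rewrite mul0r.
- by case: ne'.
Qed.

Lemma topeq_sum (I : Type) (r : seq I) (P : pred I) (F : I -> {poly K}) (v : I -> K) k :
  (forall i, P i -> topeq (F i) k (v i)) ->
  topeq (\sum_(i <- r | P i) F i) k (\sum_(i <- r | P i) v i).
Proof.
move=> h; elim/big_rec2: _; first exact: topeq0.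
by move=> i y1 y2 Pi hy; apply: topeqD => //; apply: h.
Qed.

Lemma topeq_prod (I : finType) (A : {pred I}) (F : I -> {poly K}) (d : I -> K) :
  (forall i, topeq (F i) 1 (d i)) ->
  topeq (\prod_(i in A) F i) #|A| (\prod_(i in A) d i).
Proof.
move=> h; rewrite -!big_enum cardE; elim: (enum A) => [|i s IH] /=.
  by rewrite !big_nil; apply: topeqC.
rewrite !big_cons -add1n; exact: topeqM.
Qed.

Definition lin (c d : K) : {poly K} := c%:P + d *: 'X.

Lemma topeq_lin c d : topeq (lin c d) 1 d.
Proof.
move=> j hj; rewrite /lin coefD coefC coefZ coefX.
case: j hj => // j _; rewrite add0r; case: j => [|j] /=; by rewrite ?mulr1 ?mulr0.
Qed.

Lemma hornerlin c d y : (lin c d).[y] = c + d * y.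
Proof. by rewrite /lin hornerD hornerC hornerZ hornerX. Qed.

End Top.


Section Comb.
Variable K : fieldType.
Variable T : finType.
Variable x : T -> K.
Variable t : K.

Lemma sum_powersetU1 (F : {set T} -> K) (S : {set T}) (l : T) : l \notin S ->
  \sum_(I in powerset (l |: S)) F I = \sum_(I in powerset S) (F I + F (l |: I)).
Proof.
move=> lS; rewrite big_split /= (bigID (fun I : {set T} => l \in I)) /= addrC; congr (_ + _).
  apply: eq_bigl => I; rewrite !powersetE; apply/andP/idP.
    case=> /subsetP sub lI; apply/subsetP => j jI.
    have := sub j jI; rewrite !inE; case/orP => // /eqP ejl.
    by rewrite -ejl jI in lI.
  move=> /subsetP sub; split; last by apply/negP => /sub; rewrite (negbTE lS).
  by apply/subsetP => j /sub jS; rewrite !inE jS orbT.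
rewrite (reindex_onto (fun J => l |: J) (fun I => I :\ l)) /=; last first.
  by move=> I /andP [_ lI]; rewrite setD1K.
apply: eq_bigl => J; rewrite !powersetE setU11 andbT.
apply/andP/idP.
  case=> /subsetP sub /eqP e; apply/subsetP => j jJ.
  have := sub j; rewrite !inE jJ orbT => /(_ isT) /orP [/eqP ejl|//].
  move: jJ; rewrite -e ejl !inE eqxx //.
move=> /subsetP sub; have lJ : l \notin J by apply/negP => /sub; rewrite (negbTE lS).
split; last by rewrite setU1K.
by apply/subsetP => j; rewrite !inE => /orP [->|/sub ->]; rewrite ?orbT.
Qed.

Definition Aset (S I : {set T}) :=
  \prod_(i in I) \prod_(j in S :\: I) ((t * x i - x j) / (x i - x j)).
Definition wt (S I : {set T}) (u : K) := (- u) ^+ #|I| * t ^+ 'C(#|I|, 2) * Aset S I.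
Definition gg (S I : {set T}) (a z : K) :=
  \prod_(i in I) (1 - z * x i) * \prod_(j in S :\: I) (1 - a * z * x j).
Definition Phi (S : {set T}) (u a z : K) := \sum_(I in powerset S) wt S I u * gg S I a z.

Lemma setD_out (S I : {set T}) (l : T) : l \notin S -> I \subset S -> (l |: S) :\: I = l |: (S :\: I).
Proof.
move=> lS /subsetP IS; apply/setP => j; rewrite !inE.
have [->|_] := eqVneq j l; last by rewrite /=.
by rewrite /= andbT; apply/negP => lI; move: (IS _ lI); rewrite (negbTE lS).
Qed.

Lemma setD_in (S J : {set T}) (l : T) : l \notin S -> (l |: S) :\: (l |: J) = S :\: J.
Proof.
move=> lS; apply/setP => j; rewrite !inE; have [->|//] := eqVneq j l.
by rewrite /= (negbTE lS) andbF.
Qed.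

Lemma notin_sub (S I : {set T}) (l : T) : l \notin S -> I \subset S -> l \notin I.
Proof. by move=> lS /subsetP IS; apply/negP => /IS; rewrite (negbTE lS). Qed.

Lemma Aset_out (S I : {set T}) (l : T) : l \notin S -> I \subset S ->
  Aset (l |: S) I = Aset S I * \prod_(i in I) ((t * x i - x l) / (x i - x l)).
Proof.
move=> lS IS; rewrite /Aset -big_split /=; apply: eq_bigr => i iI.
rewrite setD_out // big_setU1 /=; first by rewrite mulrC.
by rewrite !inE (negbTE lS) andbF.
Qed.

Lemma Aset_in (S J : {set T}) (l : T) : l \notin S -> J \subset S ->
  Aset (l |: S) (l |: J) = Aset S J * \prod_(j in S :\: J) ((t * x l - x j) / (x l - x j)).
Proof.
move=> lS JS; rewrite /Aset setD_in // big_setU1 /= ?(notin_sub lS JS) //.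
by rewrite mulrC.
Qed.

Lemma gg_out (S I : {set T}) (l : T) a z : l \notin S -> I \subset S ->
  gg (l |: S) I a z = gg S I a z * (1 - a * z * x l).
Proof.
move=> lS IS; rewrite /gg setD_out // big_setU1 /=; first by ring.
by rewrite !inE (negbTE lS) andbF.
Qed.

Lemma gg_in (S J : {set T}) (l : T) a z : l \notin S -> J \subset S ->
  gg (l |: S) (l |: J) a z = gg S J a z * (1 - z * x l).
Proof.
move=> lS JS; rewrite /gg setD_in // big_setU1 /= ?(notin_sub lS JS) //.
by ring.
Qed.

Lemma card_in (S J : {set T}) (l : T) : l \notin S -> J \subset S -> #|l |: J| = #|J|.+1.
Proof. by move=> lS JS; rewrite cardsU1 (notin_sub lS JS). Qed.

Lemma card_split (S I : {set T}) : I \subset S -> (#|I| + #|S :\: I|)%N = #|S|.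
Proof. by move=> IS; rewrite cardsDS // subnKC // subset_leq_card. Qed.

Lemma prod_split (S I : {set T}) (F : T -> K) : I \subset S ->
  \prod_(j in S) F j = \prod_(i in I) F i * \prod_(j in S :\: I) F j.
Proof. by move=> IS; rewrite (big_setID I) /= (setIidPr IS). Qed.

Lemma prod_divK (A : {set T}) (f g : T -> K) : (forall i, i \in A -> g i != 0) ->
  \prod_(i in A) (f i / g i) * \prod_(i in A) g i = \prod_(i in A) f i.
Proof. by move=> h; rewrite -big_split /=; apply: eq_bigr => i iA; rewrite divfK ?h. Qed.

Lemma prod_mul (A : {set T}) (f g : T -> K) :
  \prod_(i in A) f i * \prod_(i in A) g i = \prod_(i in A) (f i * g i).
Proof. by rewrite -big_split. Qed.



Definition P1 (S I : {set T}) : {poly K} :=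
  \prod_(i in I) lin (t * x i) (-1) * \prod_(j in S :\: I) lin (x j) (-1).
Definition P2 (S I : {set T}) : {poly K} :=
  \prod_(i in I) lin (x i) (-1) * \prod_(j in S :\: I) lin (x j) (- t).
Definition Npoly (S : {set T}) (u a z : K) : {poly K} :=
  \sum_(I in powerset S) (wt S I u * gg S I a z) *:
     (P1 S I * lin 1 (- (a * z)) - (u * t ^+ #|I|) *: (P2 S I * lin 1 (- z))).
Definition Dp (S : {set T}) : {poly K} := \prod_(j in S) lin (x j) (-1).

Lemma P1_eval S I y : (P1 S I).[y] =
  \prod_(i in I) (t * x i - y) * \prod_(j in S :\: I) (x j - y).
Proof.
rewrite /P1 hornerM !horner_prod; congr (_ * _); apply: eq_bigr => i _;
  by rewrite hornerlin mulN1r.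
Qed.

Lemma P2_eval S I y : (P2 S I).[y] =
  \prod_(i in I) (x i - y) * \prod_(j in S :\: I) (x j - t * y).
Proof.
rewrite /P2 hornerM !horner_prod; congr (_ * _); apply: eq_bigr => i _;
  by rewrite hornerlin ?mulN1r ?mulNr.
Qed.

Lemma Dp_eval S y : (Dp S).[y] = \prod_(j in S) (x j - y).
Proof. by rewrite /Dp horner_prod; apply: eq_bigr => i _; rewrite hornerlin mulN1r. Qed.

Lemma Npoly_eval S u a z y : (Npoly S u a z).[y] =
  \sum_(I in powerset S) (wt S I u * gg S I a z) *
    ((P1 S I).[y] * (1 - a * z * y) - u * t ^+ #|I| * (P2 S I).[y] * (1 - z * y)).
Proof.
rewrite /Npoly horner_sum; apply: eq_bigr => I _.
rewrite hornerZ hornerD hornerN hornerZ !hornerM !hornerlin.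
ring.
Qed.

Lemma Phi_split (S : {set T}) (l : T) u a z : l \notin S -> {in l |: S &, injective x} ->
  Phi (l |: S) u a z * (Dp S).[x l] = (Npoly S u a z).[x l].
Proof.
move=> lS inj.
have nel : forall j, j \in S -> x j - x l != 0.
  move=> j jS; rewrite subr_eq0; apply/eqP => /inj.
  rewrite !inE eqxx jS orbT => /(_ isT isT) ejl; move: jS; rewrite ejl.
  by rewrite (negbTE lS).
rewrite /Phi sum_powersetU1 // mulr_suml Npoly_eval; apply: eq_bigr => I.
rewrite powersetE => IS.
rewrite /wt Aset_out // Aset_in // gg_out // gg_in // (card_in lS IS).
rewrite P1_eval P2_eval Dp_eval (prod_split _ IS).
have E1 := @prod_divK I (fun i => t * x i - x l) (fun i => x i - x l)
  (fun i iI => nel i (subsetP IS i iI)).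
have E2 : \prod_(j in S :\: I) ((t * x l - x j) / (x l - x j)) *
          \prod_(j in S :\: I) (x j - x l) = \prod_(j in S :\: I) (x j - t * x l).
  rewrite prod_mul; apply: eq_bigr => j; rewrite inE => /andP [_ jS].
  rewrite -[x j - x l]opprB mulrN divfK ?opprB //.
  by rewrite -opprB oppr_eq0 nel.
rewrite /= in E1; rewrite -E1 -E2 binS bin1 exprD exprS.
ring.
Qed.


Lemma N_root (S : {set T}) (l : T) u a z : l \notin S -> {in l |: S &, injective x} ->
  (Npoly (l |: S) u a z).[x l] = 0.
Proof.
move=> lS inj.
have nel : forall j, j \in S -> x j - x l != 0.
  move=> j jS; rewrite subr_eq0; apply/eqP => /inj.
  rewrite !inE eqxx jS orbT => /(_ isT isT) ejl; move: jS; rewrite ejl.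
  by rewrite (negbTE lS).
rewrite Npoly_eval sum_powersetU1 //; apply: big1 => J.
rewrite powersetE => JS.
have lJ := notin_sub lS JS.
have lSJ : l \notin S :\: J by rewrite !inE (negbTE lS) andbF.
rewrite /wt Aset_out // Aset_in // gg_out // gg_in // (card_in lS JS).
rewrite !P1_eval !P2_eval setD_out // setD_in // !big_setU1 //=.
rewrite subrr mul0r !mulr0 mul0r.
have E1 := @prod_divK J (fun i => t * x i - x l) (fun i => x i - x l)
  (fun i iI => nel i (subsetP JS i iI)).
have E2 : \prod_(j in S :\: J) ((t * x l - x j) / (x l - x j)) *
          \prod_(j in S :\: J) (x j - x l) = \prod_(j in S :\: J) (x j - t * x l).
  rewrite prod_mul; apply: eq_bigr => j; rewrite inE => /andP [_ jS].
  rewrite -[x j - x l]opprB mulrN divfK ?opprB //.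
  by rewrite -opprB oppr_eq0 nel.
rewrite /= in E1; rewrite -E1 -E2 binS bin1 exprD exprS.
ring.
Qed.

Lemma N_at0 (S : {set T}) u a z :
  (Npoly S u a z).[0] = (Dp S).[0] * ((1 - u) * Phi S (u * t) a z).
Proof.
rewrite Npoly_eval Dp_eval /Phi !mulr_sumr; apply: eq_bigr => I.
rewrite powersetE => IS.
rewrite P1_eval P2_eval (prod_split _ IS) /wt.
have e0 : forall (A : {set T}) (f : T -> K), \prod_(i in A) (f i - 0) = \prod_(i in A) f i.
  by move=> A f; apply: eq_bigr => i _; rewrite subr0.
rewrite !mulr0 !subr0 (e0 _ (fun i => t * x i)) !(e0 _ x) -[- (u * t)]mulNr exprMn.
rewrite big_split /= prodr_const.
ring.
Qed.

Lemma prod_top (A : {set T}) (c : T -> K) d :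
  topeq (\prod_(i in A) lin (c i) d) #|A| (d ^+ #|A|).
Proof. by rewrite -prodr_const; apply: topeq_prod => i; apply: topeq_lin. Qed.

Lemma Dp_top S : topeq (Dp S) #|S| ((-1) ^+ #|S|).
Proof. exact: prod_top. Qed.

Lemma N_top (S : {set T}) u a z : topeq (Npoly S u a z) #|S|.+1
  ((-1) ^+ #|S|.+1 * z * (a - u * t ^+ #|S|) * Phi S u a z).
Proof.
rewrite /Phi mulr_sumr; apply: topeq_sum => I; rewrite powersetE => IS.
have h1 : topeq (P1 S I) #|S| ((-1) ^+ #|I| * (-1) ^+ #|S :\: I|).
  by apply: topeq_k (card_split IS) _; apply: topeqM; apply: prod_top.
have h2 : topeq (P2 S I) #|S| ((-1) ^+ #|I| * (- t) ^+ #|S :\: I|).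
  by apply: topeq_k (card_split IS) _; apply: topeqM; apply: prod_top.
have := topeqZ (wt S I u * gg S I a z) (topeqB (topeqM h1 (topeq_lin 1 (- (a * z))))
   (topeqZ (u * t ^+ #|I|) (topeqM h2 (topeq_lin 1 (- z))))).
rewrite addn1; apply: topeq_eq.
rewrite -(card_split IS) [(- t) ^+ _]exprNn !exprD !exprS.
rewrite exprD. ring.
Qed.


Lemma poly_zero_roots (P : {poly K}) (S : {set T}) : {in S &, injective x} ->
  (forall j, j \in S -> x j != 0) -> (size P <= #|S|.+1)%N -> P.[0] = 0 ->
  (forall j, j \in S -> P.[x j] = 0) -> P = 0.
Proof.
move=> inj nz sz P0 Px; apply/eqP; apply/negPn/negP => Pn0.
set rs := 0 :: [seq x j | j <- enum S].
have hall : all (root P) rs.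
  apply/andP; split; first by apply/eqP.
  by apply/allP => y /mapP [j]; rewrite mem_enum => jS ->; apply/eqP; apply: Px.
have huniq : uniq rs.
  rewrite /rs cons_uniq; apply/andP; split.
    by apply/negP => /mapP [j]; rewrite mem_enum => jS /esym/eqP; rewrite (negbTE (nz j jS)).
  rewrite map_inj_in_uniq ?enum_uniq //.
  by move=> i j; rewrite !mem_enum; apply: inj.
have := max_poly_roots Pn0 hall huniq.
by rewrite /= size_map -cardE ltnNge sz.
Qed.

Lemma Phi0 u a z : Phi set0 u a z = 1.
Proof.
rewrite /Phi (big_pred1 set0); last by move=> I; rewrite /= powersetE subset0.
by rewrite /wt /gg /Aset cards0 setD0 !big_set0 bin0n !expr0 !mul1r.
Qed.

Lemma pick_elt (S : {set T}) n : #|S| = n.+1 -> {in S &, injective x} ->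
  exists2 l, l \in S & forall j, j \in S :\ l -> x j != 0.
Proof.
move=> cS inj; case: (pickP (fun j => (j \in S) && (x j == 0))) => [l /andP [lS /eqP xl0]|none].
  exists l => // j; rewrite !inE => /andP [jl jS]; apply/negP => /eqP xj0.
  by move: jl; rewrite (inj j l jS lS) ?eqxx // xl0 xj0.
have : (0 < #|S|)%N by rewrite cS.
case/card_gt0P => l lS; exists l => // j; rewrite !inE => /andP [_ jS].
by apply/negP => xj0; have := none j; rewrite jS xj0.
Qed.

Lemma Dp_root (S : {set T}) j : j \in S -> (Dp S).[x j] = 0.
Proof. by move=> jS; rewrite Dp_eval (bigD1 j) //= subrr mul0r. Qed.

Lemma Dp_nz (S : {set T}) l : l \notin S -> {in l |: S &, injective x} -> (Dp S).[x l] != 0.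
Proof.
move=> lS inj; rewrite Dp_eval; apply/prodf_neq0 => j jS; rewrite subr_eq0.
apply/eqP => /inj; rewrite !inE eqxx jS orbT => /(_ isT isT) ejl.
by move: jS; rewrite ejl (negbTE lS).
Qed.

Lemma N_roots (S : {set T}) u a z : {in S &, injective x} ->
  forall j, j \in S -> (Npoly S u a z).[x j] = 0.
Proof.
move=> inj j jS; rewrite -(setD1K jS); apply: N_root; first by rewrite setD11.
by rewrite setD1K.
Qed.

Lemma step_common (S : {set T}) (l : T) (n : nat) u a z (Tp : {poly K}) :
  #|S| = n.+1 -> l \in S -> {in S &, injective x} ->
  (forall j, j \in S :\ l -> x j != 0) ->
  (size (Npoly (S :\ l) u a z - Dp (S :\ l) * Tp)%R <= n.+1)%N ->
  (Npoly (S :\ l) u a z - Dp (S :\ l) * Tp).[0] = 0 ->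
  Phi S u a z = Tp.[x l].
Proof.
move=> cS lS inj nz sz P0.
set S0 := S :\ l.
have lS0 : l \notin S0 by rewrite setD11.
have eS : l |: S0 = S by rewrite setD1K.
have inj0 : {in S0 &, injective x}.
  by move=> i j; rewrite !inE => /andP [_ iS] /andP [_ jS]; apply: inj.
have cS0 : #|S0| = n by move: cS; rewrite (cardsD1 l S) lS add1n => -[].
have P00 : Npoly S0 u a z - Dp S0 * Tp = 0.
  apply: (poly_zero_roots inj0 nz); rewrite ?cS0 //.
  by move=> j jS; rewrite hornerD hornerN hornerM N_roots // Dp_root // mul0r subrr.
move/eqP: P00; rewrite subr_eq0 => /eqP EN.
have := Phi_split u a z lS0; rewrite eS => /(_ inj); rewrite EN hornerM.
have nz0 : (Dp S0).[x l] != 0 by apply: Dp_nz => //; rewrite eS.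
move/(congr1 (fun v => v / (Dp S0).[x l])).
by rewrite mulfK // [_ * Tp.[_]]mulrC mulfK.
Qed.


Lemma topeqX : topeq ('X : {poly K}) 1 1.
Proof. by move=> j hj; rewrite coefX; case: eqP. Qed.

Lemma card_S0 (S : {set T}) l n : #|S| = n.+1 -> l \in S -> #|S :\ l| = n.
Proof. by move=> cS lS; move: cS; rewrite (cardsD1 l S) lS add1n => -[]. Qed.

Theorem PhiA1 n : forall (S : {set T}) u a z, #|S| = n -> {in S &, injective x} ->
  (n = 0%N \/ a = u * t ^+ n.-1) -> Phi S u a z = \prod_(i < n) (1 - u * t ^+ i).
Proof.
elim: n => [|n IH] S u a z cS inj ha.
  by move/cards0_eq: cS => ->; rewrite Phi0 big_ord0.
have ea : a = u * t ^+ n by case: ha.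
have [l lS nz] := pick_elt cS inj.
have cS0 := card_S0 cS lS.
have inj0 : {in S :\ l &, injective x}.
  by move=> i j; rewrite !inE => /andP [_ iS] /andP [_ jS]; apply: inj.
set C := \prod_(i < n.+1) (1 - u * t ^+ i).
have -> : C = (C%:P).[x l] by rewrite hornerC.
apply: (step_common (n := n) cS lS inj nz).
  apply: topeq_size0.
  have h1 := @N_top (S :\ l) u a z.
  have h2 := topeqS (topeqM (@Dp_top (S :\ l)) (topeqC C)).
  rewrite addn0 in h2.
  have := topeqB h1 h2; rewrite cS0 ea subrr mulr0 !mul0r subrr.
  by apply.
rewrite hornerD hornerN hornerM hornerC N_at0.
rewrite (IH (S :\ l) (u * t) a z cS0 inj0); last first.
  by case: n {IH cS ha cS0 C} ea => [|n] ea; [left | right; rewrite ea exprS mulrA].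
rewrite /C big_ord_recl expr0 mulr1.
have -> : \prod_(i < n) (1 - u * t ^+ lift ord0 i) = \prod_(i < n) (1 - u * t * t ^+ i).
  by apply: eq_bigr => i _; rewrite lift0 exprS mulrA.
by rewrite subrr.
Qed.

Theorem PhiA2 n : forall (S : {set T}) a z, #|S| = n -> {in S &, injective x} ->
  Phi S 1 a z = z ^+ n * \prod_(j in S) x j * \prod_(i < n) (t ^+ i - a).
Proof.
elim: n => [|n IH] S a z cS inj.
  by move/cards0_eq: cS => ->; rewrite Phi0 big_ord0 big_set0 expr0 !mulr1.
have [l lS nz] := pick_elt cS inj.
have cS0 := card_S0 cS lS.
have inj0 : {in S :\ l &, injective x}.
  by move=> i j; rewrite !inE => /andP [_ iS] /andP [_ jS]; apply: inj.
set c := z ^+ n.+1 * \prod_(j in S :\ l) x j * \prod_(i < n.+1) (t ^+ i - a).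
have -> : z ^+ n.+1 * \prod_(j in S) x j * \prod_(i < n.+1) (t ^+ i - a) = (c *: 'X).[x l].
  by rewrite hornerZ hornerX /c (big_setD1 l lS) /=; ring.
apply: (step_common (n := n) cS lS inj nz).
  apply: topeq_size0.
  have h1 := @N_top (S :\ l) 1 a z.
  have h2 := topeqM (@Dp_top (S :\ l)) (topeqZ c topeqX).
  rewrite addn1 in h2.
  have := topeqB h1 h2; rewrite cS0 (IH _ a z cS0 inj0) /c big_ord_recr /=.
  apply: topeq_eq; rewrite !exprS; ring.
rewrite hornerD hornerN hornerM hornerZ hornerX N_at0.
by rewrite subrr !mul0r !mulr0 subrr.
Qed.

End Comb.


Section Ser.
Variable K : fieldType.
Implicit Types p q r s : {poly K}.

Definition tr (N : nat) (f : nat -> K) p := forall n, (n <= N)%N -> f n = p`_n.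
Definition eqm (N : nat) p q := forall n, (n < N)%N -> p`_n = q`_n.

Lemma tr_psmul N f g p q : tr N f p -> tr N g q -> tr N (psmul f g) (p * q).
Proof.
move=> hf hg n hn; rewrite /psmul coefM; apply: eq_bigr => [[i hi]] _ /=.
by rewrite hf ?hg //; lia.
Qed.

Lemma tr_ps1 N : tr N (@ps1 K) 1.
Proof. by move=> n _; rewrite coef1. Qed.

Lemma tr_big N (I : Type) (r : seq I) (P : pred I) (F : I -> nat -> K) (p : I -> {poly K}) :
  (forall i, P i -> tr N (F i) (p i)) ->
  tr N (\big[@psmul K/@ps1 K]_(i <- r | P i) F i) (\prod_(i <- r | P i) p i).
Proof.
move=> h; elim/big_rec2: _; first exact: tr_ps1.
by move=> i y1 y2 Pi hy; apply: tr_psmul => //; apply: h.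
Qed.

Definition geoP (M : nat) (c : K) : {poly K} := \poly_(i < M) (c ^+ i).

Lemma coef_geoP M c n : (geoP M c)`_n = if (n < M)%N then c ^+ n else 0.
Proof. by rewrite coef_poly. Qed.

Lemma tr_geo N c : tr N (geo c) (geoP N.+1 c).
Proof. by move=> n hn; rewrite coef_geoP ltnS hn. Qed.

Lemma tr_shift N m f p : tr N f p -> tr N (psshift m f) ('X^m * p).
Proof.
move=> h n hn; rewrite /psshift coefXnM ltnNge.
by case: leqP => // hm; rewrite h //; lia.
Qed.

Lemma tr_eqm N f p q : tr N f p -> eqm N.+1 p q -> tr N f q.
Proof. by move=> h e n hn; rewrite h // e. Qed.

Lemma eqm_refl N p : eqm N p p. Proof. by []. Qed.
Lemma eqm_sym N p q : eqm N p q -> eqm N q p. Proof. by move=> h n hn; rewrite h. Qed.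
Lemma eqm_trans N p q r : eqm N p q -> eqm N q r -> eqm N p r.
Proof. by move=> h1 h2 n hn; rewrite h1 // h2. Qed.
Lemma eqmD N p q r s : eqm N p q -> eqm N r s -> eqm N (p + r) (q + s).
Proof. by move=> h1 h2 n hn; rewrite !coefD h1 // h2. Qed.
Lemma eqmN N p q : eqm N p q -> eqm N (- p) (- q).
Proof. by move=> h1 n hn; rewrite !coefN h1. Qed.
Lemma eqmZ N c p q : eqm N p q -> eqm N (c *: p) (c *: q).
Proof. by move=> h1 n hn; rewrite !coefZ h1. Qed.
Lemma eqmM N p q r s : eqm N p q -> eqm N r s -> eqm N (p * r) (q * s).
Proof.
move=> h1 h2 n hn; rewrite !coefM; apply: eq_bigr => [[i hi]] _ /=.
by rewrite h1 ?h2 //; lia.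
Qed.

Lemma eqm_sum N (I : Type) (r : seq I) (P : pred I) (F G : I -> {poly K}) :
  (forall i, P i -> eqm N (F i) (G i)) ->
  eqm N (\sum_(i <- r | P i) F i) (\sum_(i <- r | P i) G i).
Proof.
move=> h; elim/big_rec2: _ => // i y1 y2 Pi hy; apply: eqmD => //; exact: h.
Qed.

Lemma eqm_prod N (I : Type) (r : seq I) (P : pred I) (F G : I -> {poly K}) :
  (forall i, P i -> eqm N (F i) (G i)) ->
  eqm N (\prod_(i <- r | P i) F i) (\prod_(i <- r | P i) G i).
Proof.
move=> h; elim/big_rec2: _ => // i y1 y2 Pi hy; apply: eqmM => //; exact: h.
Qed.

Lemma coef_linM c d p n :
  (lin c d * p)`_n = c * p`_n + (if n is n'.+1 then d * p`_n' else 0).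
Proof.
rewrite /lin mulrDl coefD coefCM -scalerAl coefZ coefXM.
by case: n => [|n] /=; rewrite ?mulr0.
Qed.

Lemma lin_geo M c : eqm M (lin 1 (- c) * geoP M c) 1.
Proof.
move=> n hn; rewrite coef_linM coef1 !coef_geoP hn mul1r.
case: n hn => [|n] hn; first by rewrite expr0 addr0.
by rewrite coef_geoP (ltnW hn) /= exprS; ring.
Qed.

Lemma eqm_cancel N c A B : eqm N (lin 1 c * A) (lin 1 c * B) -> eqm N A B.
Proof.
move=> h; elim=> [|n IH] hn.
  by have := h 0%N hn; rewrite !coef_linM !mul1r !addr0.
have := h n.+1 hn; rewrite !coef_linM !mul1r IH ?(ltnW hn) //.
by move/addIr.
Qed.


Definition EN N p := \sum_(k < N.+1) ((k`!)%:R : K)^-1 *: p ^+ k.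

Lemma pow_low p : p`_0 = 0 -> forall k j, (j < k)%N -> (p ^+ k)`_j = 0.
Proof.
move=> p0; elim=> [|k IH] j hj //.
rewrite exprS coefM big1 // => [[i hi]] _ /=.
case: i hi => [|i] hi; first by rewrite p0 mul0r.
by rewrite IH ?mulr0 //; lia.
Qed.

Lemma mul_low N r s : (forall j, (j < N)%N -> s`_j = 0) ->
  forall n, (n < N)%N -> (r * s)`_n = 0.
Proof.
move=> h n hn; rewrite coefM big1 // => [[i hi]] _ /=; rewrite h ?mulr0 //; lia.
Qed.

Lemma natf_nz (ch : [pchar K] =i pred0) n : (n.+1)%:R != 0 :> K.
Proof. by rewrite ((pcharf0P K).1 ch). Qed.

Lemma EN_deriv (ch : [pchar K] =i pred0) N p : p`_0 = 0 ->
  eqm N (EN N p)^`() (p^`() * EN N p).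
Proof.
move=> p0.
have e1 : (EN N p)^`() = p^`() * \sum_(k < N) ((k`!)%:R)^-1 *: p ^+ k.
  rewrite /EN raddf_sum big_ord_recl /= derivZ expr0 derivC scaler0 add0r mulr_sumr.
  apply: eq_bigr => i _; rewrite derivZ deriv_exp /= (_ : bump 0 i = i.+1) // add0n -scalerAr.
  rewrite -scaler_nat scalerA; congr (_ *: _).
  have := natf_nz ch i; have := natf_nz ch (i`!).-1.
  rewrite prednK ?fact_gt0 // => h1 h2.
  by rewrite factS natrM invfM mulrAC mulVf ?mul1r.
have e2 : EN N p = \sum_(k < N) ((k`!)%:R)^-1 *: p ^+ k + ((N`!)%:R)^-1 *: p ^+ N.
  by rewrite /EN big_ord_recr.
move=> n hn; rewrite e1 e2 mulrDr coefD.
have -> : (p^`() * (((N`!)%:R)^-1 *: p ^+ N))`_n = 0.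
  by apply: (mul_low (N:=N)) => // j hj; rewrite coefZ pow_low ?mulr0.
by rewrite addr0.
Qed.


Lemma ode_aux (ch : [pchar K] =i pred0) N (R r : {poly K}) : R`_0 = 0 ->
  eqm N R^`() (r * R) -> forall n, (n <= N)%N -> forall m, (m <= n)%N -> R`_m = 0.
Proof.
move=> R0 h.
elim=> [|n IH] hn m hm.
  by move: hm; rewrite leqn0 => /eqP ->.
rewrite leq_eqVlt in hm; case/orP: hm => [/eqP ->|hm]; last by apply: IH; lia.
have := h n hn; rewrite coef_deriv coefM big1.
  move/eqP; rewrite -mulr_natr mulf_eq0 => /orP [/eqP //|].
  by rewrite (negbTE (natf_nz ch n)).
move=> [i hi] _ /=; rewrite IH ?mulr0 //; lia.
Qed.

Lemma ode_unique (ch : [pchar K] =i pred0) N (R r : {poly K}) : R`_0 = 0 ->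
  eqm N R^`() (r * R) -> forall n, (n <= N)%N -> R`_n = 0.
Proof. by move=> R0 h n hn; apply: (ode_aux ch R0 h hn). Qed.

Lemma linE (c d : K) : lin c d = c%:P + d%:P * 'X.
Proof. by rewrite /lin mul_polyC. Qed.

Lemma derivlin (c d : K) : (lin c d)^`() = d%:P.
Proof. by rewrite /lin derivD derivC derivZ derivX add0r -mul_polyC mulr1. Qed.

Lemma lin_id (a : K) : - lin 1 (- a) + a%:P * lin 1 (-1) = (a - 1)%:P.
Proof. rewrite !linE !polyCN polyCB polyC1; ring. Qed.

Variable a : K.
Definition gfun (r : nat) : K := if r == 0%N then 0 else - ((1 - a ^+ r) / r%:R).
Definition pg N := \poly_(i < N.+1) gfun i.
Definition Qp N := lin 1 (-1) * geoP N.+1 a.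

Lemma pg_deriv (ch : [pchar K] =i pred0) N : (pg N)^`() = a *: geoP N a - geoP N 1.
Proof.
apply/polyP => i; rewrite coef_deriv coef_poly coefB coefZ !coef_geoP /gfun /= ltnS.
case: ltnP => h; last by rewrite mul0rn mulr0 subr0.
rewrite -mulr_natr expr1n exprS; have := natf_nz ch i => hi; field; by move: hi; rewrite -natr1 addrC.
Qed.

Lemma geo_deriv N : eqm N (lin 1 (- a) * (geoP N.+1 a)^`()) (a *: geoP N.+1 a).
Proof.
move=> n hn; rewrite coef_linM coefZ mul1r.
case: n hn => [|n] hn; rewrite !coef_deriv !coef_geoP !ltnS.
  by rewrite hn addr0 expr1 expr0 mulr1.
rewrite hn (ltnW hn) (exprS a n.+1); set y := a ^+ n.+1.
rewrite -mulrnAr mulrS; set w := y *+ n.+1; ring.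
Qed.

Lemma Q_ode (ch : [pchar K] =i pred0) N : eqm N (Qp N)^`() ((pg N)^`() * Qp N).
Proof.
apply: (eqm_cancel (c := -1)); apply: (eqm_cancel (c := -a)).
set G := geoP N.+1 a.
have hQ' : (Qp N)^`() = (-1)%:P * G + lin 1 (-1) * G^`().
  by rewrite /Qp derivM derivlin.
apply: (eqm_trans (q := (a - 1)%:P * Qp N)).
  rewrite hQ'.
  have -> : lin 1 (-a) * (lin 1 (-1) * ((-1)%:P * G + lin 1 (-1) * G^`())) =
    lin 1 (-1) * ((-1)%:P * (lin 1 (-a) * G)) + lin 1 (-1) * (lin 1 (-1) * (lin 1 (-a) * G^`())).
    by ring.
  apply: (eqm_trans (q := lin 1 (-1) * ((-1)%:P * (lin 1 (-a) * G)) + lin 1 (-1) * (lin 1 (-1) * (a *: G)))).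
    apply: eqmD => //; apply: eqmM => //; apply: eqmM => //; exact: geo_deriv.
  have -> : lin 1 (-1) * ((-1)%:P * (lin 1 (-a) * G)) + lin 1 (-1) * (lin 1 (-1) * (a *: G)) =
     (a - 1)%:P * Qp N.
    by rewrite /Qp -/G -lin_id -mul_polyC polyCN polyC1; ring.
  exact: eqm_refl.
apply: eqm_sym.
have -> : lin 1 (-a) * (lin 1 (-1) * ((pg N)^`() * Qp N)) =
   (lin 1 (-1) * (lin 1 (-a) * (pg N)^`())) * Qp N by ring.
apply: eqmM => //.
rewrite pg_deriv //.
have -> : lin 1 (-1) * (lin 1 (-a) * (a *: geoP N a - geoP N 1)) =
   a%:P * (lin 1 (-1) * (lin 1 (-a) * geoP N a)) - lin 1 (-a) * (lin 1 (-1) * geoP N 1).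
  by rewrite -mul_polyC; ring.
apply: (eqm_trans (q := a%:P * (lin 1 (-1) * 1) - lin 1 (-a) * 1)).
  apply: eqmD; first by apply: eqmM => //; apply: eqmM => //; exact: lin_geo.
  by apply: eqmN; apply: eqmM => //; exact: lin_geo.
by rewrite !mulr1 -lin_id; have -> : a%:P * lin 1 (-1) - lin 1 (-a) = - lin 1 (-a) + a%:P * lin 1 (-1) by ring.
Qed.

Lemma EN_Q (ch : [pchar K] =i pred0) N : (EN N (pg N))`_N = (Qp N)`_N.
Proof.
have p0 : (pg N)`_0 = 0 by rewrite coef_poly.
have R0 : (EN N (pg N) - Qp N)`_0 = 0.
  rewrite coefB /EN coef_sum big_ord_recl /= expr0 coefZ coef1 /= invr1 mulr1.
  rewrite big1 ?addr0.
    by rewrite /Qp coef_linM mul1r addr0 coef_geoP /= expr0 subrr.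
  by move=> i _; rewrite coefZ pow_low ?mulr0.
have h : eqm N (EN N (pg N) - Qp N)^`() ((pg N)^`() * (EN N (pg N) - Qp N)).
  rewrite derivB mulrBr; apply: eqmD; first exact: EN_deriv.
  by apply: eqmN; exact: Q_ode.
have := ode_unique ch R0 h (leqnn N).
by move/eqP; rewrite coefB subr_eq0 => /eqP.
Qed.

Lemma coef_Qp N : (Qp N)`_N = a ^+ N - (if N is N'.+1 then a ^+ N' else 0).
Proof.
rewrite /Qp coef_linM mul1r coef_geoP ltnSn.
case: N => [|N]; first by rewrite !subr0 addr0.
by rewrite coef_geoP ltnW // mulN1r.
Qed.

End Ser.


Section Eps.
Variable K : fieldType.

Lemma pspow_eval n (v : 'I_n.+1 -> K) (f : nat -> {mpoly K[n.+1]}) k j :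
  (pspow f k j).@[v] = pspow (fun r => (f r).@[v]) k j.
Proof.
elim: k j => [|k IH] j.
  by rewrite /pspow /= /ps1 rmorph_nat.
rewrite /pspow !iterS -!/(pspow _ _) /psmul (big_morph _ (mevalD v) (meval0 v)); apply: eq_bigr => i _.
by rewrite mevalM IH.
Qed.

Lemma pspow_agree N (f g : nat -> K) : (forall r, (r <= N)%N -> f r = g r) ->
  forall k j, (j <= N)%N -> pspow f k j = pspow g k j.
Proof.
move=> h; elim=> [|k IH] j hj //.
rewrite /pspow !iterS -!/(pspow _ _) /psmul; apply: eq_bigr => [[i hi]] _ /=.
by rewrite h ?IH //; lia.
Qed.

Lemma tr_pspow N (f : nat -> K) p : tr N f p -> forall k, tr N (pspow f k) (p ^+ k).
Proof.
move=> h; elim=> [|k IH]; first exact: tr_ps1.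
by rewrite exprS; apply: tr_psmul.
Qed.


Lemma eps_hcoef (ch : [pchar K] =i pred0) (a t : K)
  (ht : forall r : nat, (0 < r)%N -> t ^+ r != 1) n :
  eps a t (hcoef t n) = (Qp a n)`_n.
Proof.
rewrite -EN_Q // /eps /hcoef /psexp (big_morph _ (mevalD _) (meval0 _)).
rewrite /EN coef_sum; apply: eq_bigr => k _.
rewrite mevalZ coefZ pspow_eval; congr (_ * _).
rewrite (@pspow_agree n _ (gfun a)) //.
  by apply: (tr_pspow (N := n)) => // j hj; rewrite coef_poly ltnS hj.
move=> r hr; case: r hr => [|r] hr; first by rewrite /gfun /= meval0.
rewrite /gfun /= mevalZ /psum mevalXU inordK; last by lia.
have h1 : 1 - t ^+ r.+1 != 0 by rewrite subr_eq0 eq_sym; apply: ht.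
have h2 : r.+1%:R != 0 :> K by apply: natf_nz.
rewrite /=; field; rewrite h1 andbT; by move: h2; rewrite -natr1 addrC.
Qed.

Lemma tr_eprod (ch : [pchar K] =i pred0) (a t : K)
  (ht : forall r : nat, (0 < r)%N -> t ^+ r != 1) N w :
  tr N (eprod a t w) (lin 1 (- w) * geoP N.+1 (a * w)).
Proof.
move=> n hn; rewrite /eprod eps_hcoef // coef_Qp coef_linM mul1r coef_geoP ltnS hn.
case: n hn => [|n] hn; first by rewrite !expr0 subr0 addr0 mulr1.
rewrite coef_geoP ltnS (ltnW hn) !exprMn !exprS; ring.
Qed.

End Eps.


Section Main.
Variable K : fieldType.

Lemma topeq_up (p : {poly K}) k v n : topeq p k v -> (k < n)%N -> topeq p n 0.
Proof.
move=> hp hk j hj; rewrite hp; last by lia.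
have -> : (j == k) = false by apply/eqP; lia.
by case: eqP.
Qed.

Lemma natf_inj (ch : [pchar K] =i pred0) i j : i%:R = j%:R :> K -> i = j.
Proof.
wlog h : i j / (i <= j)%N.
  by move=> H e; case: (leqP i j) => h; [apply: H | apply/esym/H; [apply: ltnW|]].
move=> e; have : (j - i)%:R == 0 :> K by rewrite natrB // e subrr.
rewrite ((pcharf0P K).1 ch) => /eqP; lia.
Qed.

Lemma poly_zero_nat (ch : [pchar K] =i pred0) (P : {poly K}) n :
  (size P <= n.+1)%N -> (forall i, (i <= n)%N -> P.[i%:R] = 0) -> P = 0.
Proof.
move=> sz Pz; apply/eqP; apply/negPn/negP => Pn0.
set rs := [seq (i%:R : K) | i <- iota 0 n.+1].
have hall : all (root P) rs.
  by apply/allP => y /mapP [i]; rewrite mem_iota add0n ltnS => /andP [_ hi] ->; apply/eqP; apply: Pz.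
have huniq : uniq rs.
  by rewrite map_inj_in_uniq ?iota_uniq // => i j _ _; apply: natf_inj.
have := max_poly_roots Pn0 hall huniq.
by rewrite size_map size_iota ltnNge sz.
Qed.

Lemma tprod_id (t a : K) : t != 0 -> forall n,
  t ^+ 'C(n, 2) * \prod_(i < n) (1 - a / t ^+ i) = \prod_(i < n) (t ^+ i - a).
Proof.
move=> t0; elim=> [|n IH]; first by rewrite !big_ord0 bin0n expr0 mulr1.
rewrite !big_ord_recr /= -IH binS bin1 exprD.
have : t ^+ n != 0 by rewrite expf_neq0.
move=> h; by field.
Qed.

Variable m : nat.
Variable x : 'I_m -> K.
Variable t : K.

Definition cI (u : K) (I : {set 'I_m}) :=
  (- u) ^+ #|I| * t ^+ 'C(#|I|, 2) * \prod_(i in I) \prod_(j in ~: I) ((t * x i - x j) / (x i - x j)).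

Definition Phipoly (u a : K) : {poly K} :=
  \sum_(I : {set 'I_m}) cI u I *:
     (\prod_(i in I) lin 1 (- x i) * \prod_(j in ~: I) lin 1 (- (a * x j))).

Lemma Phipoly_eval u a z : (Phipoly u a).[z] = Phi x t setT u a z.
Proof.
rewrite /Phi powersetT horner_sum; apply: eq_big => [I|I _]; first by rewrite inE.
rewrite hornerZ hornerM !horner_prod /wt /gg /Aset !setTD /cI; congr (_ * (_ * _)).
  by apply: eq_bigr => i _; rewrite hornerlin; ring.
by apply: eq_bigr => i _; rewrite hornerlin; ring.
Qed.

Lemma Phipoly_top u a : exists v, topeq (Phipoly u a) m v.
Proof.
eexists; apply: topeq_sum => I _; apply: topeqZ.
have := topeqM (topeq_prod (A := I) (fun i => topeq_lin 1 (- x i)))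
  (topeq_prod (A := ~: I) (fun i => topeq_lin 1 (- (a * x i)))).
by rewrite cardsC card_ord; apply.
Qed.

Lemma Phipoly_size u a : (size (Phipoly u a) <= m.+1)%N.
Proof. by have [v h] := Phipoly_top u a; apply: topeq_size h. Qed.


Lemma topeqXn n : topeq ('X^n : {poly K}) n 1.
Proof. by move=> j _; rewrite coefXn; case: eqP. Qed.

Lemma Phipoly1 (ch : [pchar K] =i pred0) (inj : injective x) u :
  Phipoly u (u * t ^+ m.-1) = (\prod_(i < m) (1 - u * t ^+ i))%:P.
Proof.
apply/eqP; rewrite -subr_eq0; apply/eqP; apply: (poly_zero_nat ch (n := m)).
  have [v h] := Phipoly_top u (u * t ^+ m.-1); apply: topeq_size0.
  have := topeqB (topeq_up h (ltnSn m)) (topeq_up (topeqC (\prod_(i < m) (1 - u * t ^+ i))) (ltn0Sn m)).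
  by rewrite subrr.
move=> i _; rewrite hornerD hornerN hornerC Phipoly_eval (PhiA1 (n := m)) ?subrr //.
- by rewrite cardsT card_ord.
- by move=> i1 j1 _ _; apply: inj.
- by right.
Qed.

Lemma Phipoly2 (ch : [pchar K] =i pred0) (inj : injective x) a :
  Phipoly 1 a = (\prod_(i < m) x i * \prod_(i < m) (t ^+ i - a)) *: 'X^m.
Proof.
apply/eqP; rewrite -subr_eq0; apply/eqP; apply: (poly_zero_nat ch (n := m)).
  have [v h] := Phipoly_top 1 a; apply: topeq_size0.
  have := topeqB (topeq_up h (ltnSn m)) (topeq_up (topeqZ (\prod_(i < m) x i * \prod_(i < m) (t ^+ i - a)) (@topeqXn m)) (ltnSn m)).
  by rewrite subrr.
move=> i _; rewrite hornerD hornerN hornerZ hornerXn Phipoly_eval (@PhiA2 _ _ x t m).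
- have -> : \prod_(j in [set: 'I_m]) x j = \prod_(i < m) x i by apply: eq_bigl => j; rewrite inE.
  by apply/eqP; rewrite subr_eq0; apply/eqP; ring.
- by rewrite cardsT card_ord.
- by move=> i1 j1 _ _; apply: inj.
Qed.

Definition Lp N u a : {poly K} := \sum_(I : {set 'I_m}) cI u I *:
  \prod_(i in I) (lin 1 (- x i) * geoP N.+1 (a * x i)).

Lemma prod_splitC (F : 'I_m -> {poly K}) (I : {set 'I_m}) :
  \prod_(i < m) F i = \prod_(i in I) F i * \prod_(i in ~: I) F i.
Proof.
rewrite (bigID (mem I)) /=; congr (_ * _); apply: eq_bigl => i; by rewrite ?inE.
Qed.

Lemma prod_lingeo N a (P : pred 'I_m) :
  eqm N.+1 (\prod_(i | P i) lin 1 (- (a * x i)) * \prod_(i | P i) geoP N.+1 (a * x i)) 1.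
Proof.
rewrite -big_split /=.
apply: (eqm_trans (q := \prod_(i | P i) (1 : {poly K}))).
  by apply: eqm_prod => i _; exact: lin_geo.
by rewrite big1_eq.
Qed.

Lemma assemble N u a (Rc : {poly K}) : Phipoly u a = Rc ->
  eqm N.+1 (Lp N u a) (Rc * \prod_(i < m) geoP N.+1 (a * x i)).
Proof.
move=> eR.
have hPG : eqm N.+1 (\prod_(i < m) lin 1 (- (a * x i)) * \prod_(i < m) geoP N.+1 (a * x i)) 1.
  exact: (@prod_lingeo N a xpredT).
have hLP : eqm N.+1 (Lp N u a * \prod_(i < m) lin 1 (- (a * x i))) (Phipoly u a).
  rewrite /Lp /Phipoly mulr_suml; apply: eqm_sum => I _.
  rewrite -scalerAl; apply: eqmZ.
  rewrite (prod_splitC _ I) big_split /=.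
  set lx := \prod_(i in I) lin 1 (- x i).
  set G := \prod_(i in I) geoP N.+1 (a * x i).
  set la := \prod_(i in I) lin 1 (- (a * x i)).
  set lb := \prod_(i in ~: I) lin 1 (- (a * x i)).
  have -> : lx * G * (la * lb) = lx * (la * G) * lb by ring.
  apply: (eqm_trans (q := lx * 1 * lb)); last by rewrite mulr1.
  by apply: eqmM => //; apply: eqmM => //; apply: (@prod_lingeo N a (mem I)).
apply: (eqm_trans (q := Lp N u a * (\prod_(i < m) lin 1 (- (a * x i)) * \prod_(i < m) geoP N.+1 (a * x i)))).
  rewrite -{1}[Lp N u a]mulr1; apply: eqmM => //; exact: eqm_sym.
rewrite mulrA; apply: eqmM => //; rewrite -eR; exact: hLP.
Qed.

End Main.

Unset Implicit Arguments.

Theorem lemma3p2 (K : fieldType) (m : nat) (x : 'I_m -> K) (t u a : K) :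
  [pchar K] =i pred0 ->
  injective x ->
  (forall r : nat, (0 < r)%N -> t ^+ r != 1) ->
  t != 0 ->
  epsF u (u * t ^+ m.-1) t x =
    (fun n => (\prod_(i < m) (1 - u * t ^+ (m.-1 - i)%N))
              * (\big[@psmul K/@ps1 K]_(i < m) geo (u * t ^+ m.-1 * x i)) n)
  /\
  epsF 1 a t x =
    psshift m (fun n => t ^+ 'C(m, 2) * (\prod_(i < m) x i)
              * (\prod_(i < m) (1 - a / t ^+ i))
              * (\big[@psmul K/@ps1 K]_(i < m) geo (a * x i)) n).
Proof.
move=> ch inj ht t0.
have tL : forall N u' a', tr N (epsF u' a' t x) (Lp x t N u' a').
  move=> N u' a' n hn; rewrite /epsF /Lp coef_sum; apply: eq_bigr => I _.
  rewrite coefZ /cI; congr (_ * _).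
  by apply: (tr_big (N := N)) => // i _; apply: tr_eprod.
have tG : forall N c, tr N (\big[@psmul K/@ps1 K]_(i < m) geo (c * x i))
                          (\prod_(i < m) geoP N.+1 (c * x i)).
  by move=> N c; apply: tr_big => i _; apply: tr_geo.
split.
  apply: functional_extensionality => n.
  have e1 := @assemble K m x t n u _ _ (@Phipoly1 K m x t ch inj u).
  rewrite (tL n u _ n (leqnn n)) (e1 n (ltnSn n)) coefCM (tG n _ n (leqnn n)).
  congr (_ * _).
  rewrite [RHS](reindex_inj rev_ord_inj) /=; apply: eq_bigr => i _.
  by rewrite (_ : (m.-1 - (m - i.+1) = i)%N) //; have := ltn_ord i; lia.
apply: functional_extensionality => n.
have e2 := @assemble K m x t n 1 a _ (@Phipoly2 K m x t ch inj a).
rewrite (tL n 1 a n (leqnn n)) (e2 n (ltnSn n)).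
set c2 := t ^+ 'C(m, 2) * \prod_(i < m) x i * \prod_(i < m) (1 - a / t ^+ i).
have tS : tr n (psshift m (fun k => c2 * (\big[@psmul K/@ps1 K]_(i < m) geo (a * x i)) k))
               ('X^m * (c2 *: \prod_(i < m) geoP n.+1 (a * x i))).
  apply: tr_shift => k hk; rewrite coefZ (tG n a k hk) //.
rewrite (tS n (leqnn n)).
have -> : c2 = \prod_(i < m) x i * \prod_(i < m) (t ^+ i - a).
  by rewrite /c2 -(tprod_id a t0); ring.
by rewrite -scalerAl scalerAr.
Qed.
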